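(* Let $A$ be an algebra over a field $\Bbbk$. The $A$-bimodule $A$ (with structure map ${}_Am_A=m\circ(m\otimes 1):A\otimes A\otimes A\to A$) is projective in the category ${}_A\mathcal{M}_A$ of $A$-bimodules if and only if $A$ admits a normalized nearly Frobenius coproduct.
   Context: Algebras are associative and unital; tensor products over $\Bbbk$; $m$ denotes multiplication. A nearly Frobenius coproduct on $A$ is a $\Bbbk$-linear map $\Delta:A\to A\otimes A$ with $\Delta\circ m=(1\otimes m)\circ(\Delta\otimes 1)=(m\otimes 1)\circ(1\otimes\Delta)$; it is normalized if $m\circ\Delta=\operatorname{Id}_A$. *)

(* Defs.v *)
From HB Require Import structures.
From mathcomp Require Import all_boot all_order all_algebra.
Set Implicit Arguments. Unset Strict Implicit. Unset Printing Implicit Defensive.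
Import GRing.Theory.
Local Open Scope ring_scope.

Definition klinear (k : fieldType) (U V : lmodType k) (f : U -> V) : Prop :=
  forall (c : k) (x y : U), f (c *: x + y) = c *: f x + f y.

Definition bilinear2 (k : fieldType) (U V W : lmodType k) (f : U -> V -> W) : Prop :=
  (forall v, klinear (fun u => f u v)) /\ (forall u, klinear (f u)).

Definition trilinear3 (k : fieldType) (U V X W : lmodType k)
  (f : U -> V -> X -> W) : Prop :=
  (forall v x, klinear (fun u => f u v x)) /\
  (forall u x, klinear (fun v => f u v x)) /\
  (forall u v, klinear (f u v)).

(* A tensor product U (x) V over k, given by its universal property:
   a bilinear map t : U -> V -> T such that every bilinear map out of U x V
   factors uniquely through a linear map T -> W. *)
Record tensor2 (k : fieldType) (U V : lmodType k) := Tensor2 {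
  t2_space :> lmodType k;
  t2 : U -> V -> t2_space;
  t2_bilinear : bilinear2 t2;
  t2_lift : forall W : lmodType k, (U -> V -> W) -> t2_space -> W;
  t2_lift_linear : forall (W : lmodType k) (f : U -> V -> W),
      bilinear2 f -> klinear (t2_lift f);
  t2_lift_t : forall (W : lmodType k) (f : U -> V -> W),
      bilinear2 f -> forall u v, t2_lift f (t2 u v) = f u v;
  t2_unique : forall (W : lmodType k) (g h : t2_space -> W),
      klinear g -> klinear h -> (forall u v, g (t2 u v) = h (t2 u v)) ->
      forall x, g x = h x
}.

Record tensor3 (k : fieldType) (U V X : lmodType k) := Tensor3 {
  t3_space :> lmodType k;
  t3 : U -> V -> X -> t3_space;
  t3_trilinear : trilinear3 t3;
  t3_lift : forall W : lmodType k, (U -> V -> X -> W) -> t3_space -> W;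
  t3_lift_linear : forall (W : lmodType k) (f : U -> V -> X -> W),
      trilinear3 f -> klinear (t3_lift f);
  t3_lift_t : forall (W : lmodType k) (f : U -> V -> X -> W),
      trilinear3 f -> forall u v x, t3_lift f (t3 u v x) = f u v x;
  t3_unique : forall (W : lmodType k) (g h : t3_space -> W),
      klinear g -> klinear h -> (forall u v x, g (t3 u v x) = h (t3 u v x)) ->
      forall y, g y = h y
}.

Section Frobenius.
Variables (k : fieldType) (A : algType k) (T2 : tensor2 A A) (T3 : tensor3 A A A).

Definition mult : T2 -> A := t2_lift (W := A) (fun a b : A => a * b).

Definition t3_r (x : T2) (b : A) : T3 := t2_lift (W := T3) (fun a a' => t3 T3 a a' b) x.
Definition t3_l (a : A) (x : T2) : T3 := t2_lift (W := T3) (fun a' b => t3 T3 a a' b) x.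

Definition comul_id (D : A -> T2) : T2 -> T3 :=
  t2_lift (W := T3) (fun a b => t3_r (D a) b).
Definition id_comul (D : A -> T2) : T2 -> T3 :=
  t2_lift (W := T3) (fun a b => t3_l a (D b)).

Definition id_mult : T3 -> T2 := t3_lift (W := T2) (fun a b c => t2 T2 a (b * c)).
Definition mult_id : T3 -> T2 := t3_lift (W := T2) (fun a b c => t2 T2 (a * b) c).

Definition nearly_frobenius (D : A -> T2) : Prop :=
  klinear D /\
  (forall x : T2, D (mult x) = id_mult (comul_id D x)) /\
  (forall x : T2, D (mult x) = mult_id (id_comul D x)).

Definition normalized (D : A -> T2) : Prop := forall a : A, mult (D a) = a.

End Frobenius.

Record bimodule (k : fieldType) (A : algType k) := Bimodule {
  bm_space :> lmodType k;
  bm_l : A -> bm_space -> bm_space;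
  bm_r : bm_space -> A -> bm_space;
  bm_l_bilinear : bilinear2 bm_l;
  bm_r_bilinear : bilinear2 bm_r;
  bm_l_assoc : forall a b x, bm_l (a * b) x = bm_l a (bm_l b x);
  bm_l_unit : forall x, bm_l 1 x = x;
  bm_r_assoc : forall x a b, bm_r x (a * b) = bm_r (bm_r x a) b;
  bm_r_unit : forall x, bm_r x 1 = x;
  bm_lr : forall a x b, bm_l a (bm_r x b) = bm_r (bm_l a x) b
}.

Definition bimod_morph (k : fieldType) (A : algType k) (M N : bimodule A)
  (f : M -> N) : Prop :=
  klinear f /\ (forall a x, f (bm_l a x) = bm_l a (f x)) /\
  (forall x a, f (bm_r x a) = bm_r (f x) a).

Definition bimod_projective (k : fieldType) (A : algType k) (P : bimodule A) : Prop :=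
  forall (M N : bimodule A) (f : M -> N) (g : P -> N),
    bimod_morph f -> (forall y : N, exists x : M, f x = y) -> bimod_morph g ->
    exists h : P -> M, bimod_morph h /\ forall p, f (h p) = g p.

Section Regular.
Variables (k : fieldType) (A : algType k).

Lemma reg_l_bilinear : bilinear2 (fun a x : A => a * x).
Proof.
split=> [v c x y|u c x y] /=; first by rewrite mulrDl scalerAl.
by rewrite mulrDr scalerAr.
Qed.

Lemma reg_r_bilinear : bilinear2 (fun x a : A => x * a).
Proof.
split=> [v c x y|u c x y] /=; first by rewrite mulrDl scalerAl.
by rewrite mulrDr scalerAr.
Qed.

Definition regular_bimodule : bimodule A :=
  @Bimodule k A A (fun a x => a * x) (fun x a => x * a)
    reg_l_bilinear reg_r_bilinear
    (fun a b x => esym (mulrA a b x)) (@mul1r A)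
    (fun x a b => mulrA x a b) (@mulr1 A) (fun a x b => mulrA a x b).

End Regular.

(* Main.v *)
Require Import Defs.
From mathcomp Require Import all_boot all_order all_algebra.
Set Implicit Arguments. Unset Strict Implicit. Unset Printing Implicit Defensive.
Import GRing.Theory.
Local Open Scope ring_scope.

Section Lin.
Variable k : fieldType.

Lemma kl0 (U V : lmodType k) (f : U -> V) : klinear f -> f 0 = 0.
Proof.
move=> H; have E := H 1 0 0; rewrite !scale1r addr0 in E.
have: f 0 + f 0 - f 0 = f 0 - f 0 by rewrite -E.
by rewrite addrK subrr.
Qed.

Lemma klcomp (U V W : lmodType k) (f : V -> W) (g : U -> V) :
  klinear f -> klinear g -> klinear (fun x => f (g x)).
Proof. by move=> Hf Hg c x y; rewrite Hg Hf. Qed.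

Lemma klid (U : lmodType k) : klinear (fun x : U => x).
Proof. by []. Qed.

Lemma kllc (U V : lmodType k) (f g : U -> V) (c : k) :
  klinear f -> klinear g -> klinear (fun x => c *: f x + g x).
Proof.
move=> Hf Hg d x y; rewrite Hf Hg scalerDr !scalerA mulrC -scalerA.
by rewrite addrACA scalerDr.
Qed.

End Lin.

Section T.
Variables (k : fieldType) (A : algType k) (T2 : tensor2 A A) (T3 : tensor3 A A A).

Lemma bil_mul : bilinear2 (fun a b : A => a * b).
Proof. exact: reg_l_bilinear. Qed.

Lemma mult_t u v : mult (t2 T2 u v) = u * v.
Proof. exact: (t2_lift_t T2 bil_mul). Qed.

Lemma mult_lin : klinear (@mult _ _ T2).
Proof. exact: (t2_lift_linear bil_mul). Qed.

Definition Lmul (a : A) : T2 -> T2 := t2_lift (W := T2) (fun u v => t2 T2 (a * u) v).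
Definition Rmul (b : A) : T2 -> T2 := t2_lift (W := T2) (fun u v => t2 T2 u (v * b)).

Lemma bil_L a : bilinear2 (fun u v : A => t2 T2 (a * u) v).
Proof.
split=> [v c x y|u c x y] /=.
  rewrite mulrDr -scalerAr; exact: (t2_bilinear T2).1 v c (a * x) (a * y).
exact: (t2_bilinear T2).2 (a * u) c x y.
Qed.

Lemma bil_R b : bilinear2 (fun u v : A => t2 T2 u (v * b)).
Proof.
split=> [v c x y|u c x y] /=.
  exact: (t2_bilinear T2).1 (v * b) c x y.
rewrite mulrDl -scalerAl; exact: (t2_bilinear T2).2 u c (x * b) (y * b).
Qed.

Lemma Lmul_t a u v : Lmul a (t2 T2 u v) = t2 T2 (a * u) v.
Proof. exact: (t2_lift_t T2 (bil_L a)). Qed.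
Lemma Rmul_t b u v : Rmul b (t2 T2 u v) = t2 T2 u (v * b).
Proof. exact: (t2_lift_t T2 (bil_R b)). Qed.
Lemma Lmul_lin a : klinear (Lmul a).
Proof. exact: (t2_lift_linear (bil_L a)). Qed.
Lemma Rmul_lin a : klinear (Rmul a).
Proof. exact: (t2_lift_linear (bil_R a)). Qed.

Lemma Lmul_bil : bilinear2 Lmul.
Proof.
split=> [x c a a'|a]; last exact: Lmul_lin.
move: x; apply: (t2_unique (g := Lmul (c *: a + a'))
   (h := fun x => c *: Lmul a x + Lmul a' x)).
- exact: Lmul_lin.
- exact: kllc (Lmul_lin a) (Lmul_lin a').
move=> u v; rewrite !Lmul_t mulrDl -scalerAl.
exact: (t2_bilinear T2).1 v c (a * u) (a' * u).
Qed.

Lemma Rmul_bil : bilinear2 (fun x b => Rmul b x).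
Proof.
split=> [b|x c a a'] /=; first exact: Rmul_lin.
move: x; apply: (t2_unique (g := Rmul (c *: a + a'))
   (h := fun x => c *: Rmul a x + Rmul a' x)).
- exact: Rmul_lin.
- exact: kllc (Rmul_lin a) (Rmul_lin a').
move=> u v; rewrite !Rmul_t mulrDr -scalerAr.
exact: (t2_bilinear T2).2 u c (v * a) (v * a').
Qed.

Lemma Lmul_assoc a b x : Lmul (a * b) x = Lmul a (Lmul b x).
Proof.
move: x; apply: (t2_unique (g := Lmul (a * b)) (h := fun x => Lmul a (Lmul b x))).
- exact: Lmul_lin.
- exact: klcomp (Lmul_lin a) (Lmul_lin b).
by move=> u v; rewrite !Lmul_t mulrA.
Qed.

Lemma Lmul_unit x : Lmul 1 x = x.
Proof.
move: x; apply: (t2_unique (g := Lmul 1) (h := fun x => x)).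
- exact: Lmul_lin.
- exact: klid.
by move=> u v; rewrite !Lmul_t mul1r.
Qed.

Lemma Rmul_assoc x a b : Rmul (a * b) x = Rmul b (Rmul a x).
Proof.
move: x; apply: (t2_unique (g := Rmul (a * b)) (h := fun x => Rmul b (Rmul a x))).
- exact: Rmul_lin.
- exact: klcomp (Rmul_lin b) (Rmul_lin a).
by move=> u v; rewrite !Rmul_t mulrA.
Qed.

Lemma Rmul_unit x : Rmul 1 x = x.
Proof.
move: x; apply: (t2_unique (g := Rmul 1) (h := fun x => x)).
- exact: Rmul_lin.
- exact: klid.
by move=> u v; rewrite !Rmul_t mulr1.
Qed.

Lemma LR a x b : Lmul a (Rmul b x) = Rmul b (Lmul a x).
Proof.
move: x; apply: (t2_unique (g := fun x => Lmul a (Rmul b x)) (h := fun x => Rmul b (Lmul a x))).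
- exact: klcomp (Lmul_lin a) (Rmul_lin b).
- exact: klcomp (Rmul_lin b) (Lmul_lin a).
by move=> u v; rewrite !Rmul_t !Lmul_t Rmul_t.
Qed.

Definition TT : bimodule A :=
  @Bimodule k A T2 Lmul (fun x b => Rmul b x) Lmul_bil Rmul_bil
    Lmul_assoc Lmul_unit Rmul_assoc Rmul_unit LR.

Lemma mult_morph : bimod_morph (M := TT) (N := regular_bimodule A) (@mult _ _ T2).
Proof.
split; first exact: mult_lin.
split=> [a x|x a] /=.
  move: x; apply: (t2_unique (g := fun x => mult (Lmul a x)) (h := fun x => a * mult x)).
  - exact: klcomp mult_lin (Lmul_lin a).
  - exact: klcomp ((reg_l_bilinear A).2 a) mult_lin.
  by move=> u v; rewrite Lmul_t !mult_t mulrA.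
move: x; apply: (t2_unique (g := fun x => mult (Rmul a x)) (h := fun x => mult x * a)).
- exact: klcomp mult_lin (Rmul_lin a).
- exact: klcomp ((reg_r_bilinear A).1 a) mult_lin.
by move=> u v; rewrite Rmul_t !mult_t mulrA.
Qed.

Lemma bil_t3r b : bilinear2 (fun a a' : A => t3 T3 a a' b).
Proof. split=> [v|u]; [exact: (t3_trilinear T3).1 v b | exact: (t3_trilinear T3).2.1 u b]. Qed.
Lemma bil_t3l a : bilinear2 (fun a' b : A => t3 T3 a a' b).
Proof. split=> [v|u]; [exact: (t3_trilinear T3).2.1 a v | exact: (t3_trilinear T3).2.2 a u]. Qed.

Lemma t3r_t u v b : t3_r T3 (t2 T2 u v) b = t3 T3 u v b.
Proof. exact: (t2_lift_t T2 (bil_t3r b)). Qed.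
Lemma t3l_t a u v : t3_l T3 a (t2 T2 u v) = t3 T3 a u v.
Proof. exact: (t2_lift_t T2 (bil_t3l a)). Qed.
Lemma t3r_lin b : klinear (fun y : T2 => t3_r T3 y b).
Proof. exact: (t2_lift_linear (bil_t3r b)). Qed.
Lemma t3l_lin a : klinear (@t3_l _ _ T2 T3 a).
Proof. exact: (t2_lift_linear (bil_t3l a)). Qed.

Lemma t3r_lin2 (y : T2) : klinear (t3_r T3 y).
Proof.
move=> c b b'; move: y.
apply: (t2_unique (g := fun y : T2 => t3_r T3 y (c *: b + b'))
   (h := fun y : T2 => c *: t3_r T3 y b + t3_r T3 y b')).
- exact: t3r_lin.
- exact: kllc (t3r_lin b) (t3r_lin b').
move=> u v; rewrite !t3r_t; exact: (t3_trilinear T3).2.2 u v c b b'.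
Qed.

Lemma t3l_lin1 (y : T2) : klinear (fun a => t3_l T3 a y).
Proof.
move=> c a a'; move: y.
apply: (t2_unique (g := fun y : T2 => t3_l T3 (c *: a + a') y)
   (h := fun y : T2 => c *: t3_l T3 a y + t3_l T3 a' y)).
- exact: t3l_lin.
- exact: kllc (t3l_lin a) (t3l_lin a').
move=> u v; rewrite !t3l_t; exact: (t3_trilinear T3).1 u v c a a'.
Qed.

Section D.
Variables (D : A -> T2) (HD : klinear D).

Lemma bil_comul_id : bilinear2 (fun a b => t3_r T3 (D a) b).
Proof.
split=> [b c x y|y] /=; last exact: t3r_lin2.
rewrite HD; exact: t3r_lin.
Qed.

Lemma bil_id_comul : bilinear2 (fun a b => t3_l T3 a (D b)).
Proof.
split=> [b|a c x y] /=; first exact: t3l_lin1.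
rewrite HD; exact: t3l_lin.
Qed.

Lemma comul_id_t u v : comul_id T3 D (t2 T2 u v) = t3_r T3 (D u) v.
Proof. exact: (t2_lift_t T2 bil_comul_id). Qed.
Lemma id_comul_t u v : id_comul T3 D (t2 T2 u v) = t3_l T3 u (D v).
Proof. exact: (t2_lift_t T2 bil_id_comul). Qed.
Lemma comul_id_lin : klinear (comul_id T3 D).
Proof. exact: (t2_lift_linear bil_comul_id). Qed.
Lemma id_comul_lin : klinear (id_comul T3 D).
Proof. exact: (t2_lift_linear bil_id_comul). Qed.
End D.

Lemma tri_idm : trilinear3 (fun a b c : A => t2 T2 a (b * c)).
Proof.
split; [|split].
- move=> v x; exact: (t2_bilinear T2).1 (v * x).
- move=> u x c y z /=; rewrite mulrDl -scalerAl; exact: (t2_bilinear T2).2 u c (y * x) (z * x).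
- move=> u v c y z /=; rewrite mulrDr -scalerAr; exact: (t2_bilinear T2).2 u c (v * y) (v * z).
Qed.

Lemma tri_mid : trilinear3 (fun a b c : A => t2 T2 (a * b) c).
Proof.
split; [|split].
- move=> v x c y z /=; rewrite mulrDl -scalerAl; exact: (t2_bilinear T2).1 x c (y * v) (z * v).
- move=> u x c y z /=; rewrite mulrDr -scalerAr; exact: (t2_bilinear T2).1 x c (u * y) (u * z).
- move=> u v; exact: (t2_bilinear T2).2 (u * v).
Qed.

Lemma id_mult_t a b c : id_mult T2 (t3 T3 a b c) = t2 T2 a (b * c).
Proof. exact: (t3_lift_t T3 tri_idm). Qed.
Lemma mult_id_t a b c : mult_id T2 (t3 T3 a b c) = t2 T2 (a * b) c.
Proof. exact: (t3_lift_t T3 tri_mid). Qed.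
Lemma id_mult_lin : klinear (@id_mult _ _ T2 T3).
Proof. exact: (t3_lift_linear tri_idm). Qed.
Lemma mult_id_lin : klinear (@mult_id _ _ T2 T3).
Proof. exact: (t3_lift_linear tri_mid). Qed.

Lemma idm_t3r (y : T2) b : id_mult T2 (t3_r T3 y b) = Rmul b y.
Proof.
move: y; apply: (t2_unique (g := fun y : T2 => id_mult T2 (t3_r T3 y b)) (h := Rmul b)).
- exact: klcomp id_mult_lin (t3r_lin b).
- exact: Rmul_lin.
by move=> u v; rewrite t3r_t id_mult_t Rmul_t.
Qed.

Lemma midt3l a (y : T2) : mult_id T2 (t3_l T3 a y) = Lmul a y.
Proof.
move: y; apply: (t2_unique (g := fun y : T2 => mult_id T2 (t3_l T3 a y)) (h := Lmul a)).
- exact: klcomp mult_id_lin (t3l_lin a).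
- exact: Lmul_lin.
by move=> u v; rewrite t3l_t mult_id_t Lmul_t.
Qed.

End T.

Theorem theorem34 (k : fieldType) (A : algType k)
  (T2 : tensor2 A A) (T3 : tensor3 A A A) :
  bimod_projective (regular_bimodule A) <->
  exists D : A -> T2, nearly_frobenius T3 D /\ normalized D.
Proof.
split.
  move=> P.
  have surj : forall y : regular_bimodule A, exists x : TT T2, mult x = y.
    by move=> y; exists (t2 T2 1 y); rewrite mult_t mul1r.
  have idm : bimod_morph (M := regular_bimodule A) (N := regular_bimodule A) id.
    by split.
  have [h [hm hf]] := P (TT T2) (regular_bimodule A) _ id (mult_morph T2) surj idm.
  exists h; split; last exact: hf.
  have hlin : @klinear k A T2 h by case: hm.
  split; first exact: hlin.
  split.
    apply: (t2_unique (g := fun x => h (mult x))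
                       (h := fun x => id_mult T2 (comul_id T3 h x))).
    - exact (klcomp hlin (@mult_lin _ _ T2)).
    - exact: klcomp (@id_mult_lin _ _ T2 T3) (comul_id_lin T3 hlin).
    move=> u v; rewrite mult_t comul_id_t // idm_t3r.
    exact: hm.2.2 u v.
  apply: (t2_unique (g := fun x => h (mult x))
                     (h := fun x => mult_id T2 (id_comul T3 h x))).
  - exact (klcomp hlin (@mult_lin _ _ T2)).
  - exact: klcomp (@mult_id_lin _ _ T2 T3) (id_comul_lin T3 hlin).
  move=> u v; rewrite mult_t id_comul_t // midt3l.
  exact: hm.2.1 u v.
case=> D [[HD [F1 F2]] Hn] M N f g fm fs gm.
have [x0 Hx0] := fs (g 1).
pose phi := fun u v : A => bm_r (bm_l u x0) v.
have bphi : bilinear2 phi.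
  split=> [v c x y|u c x y]; rewrite /phi.
    by rewrite (bm_l_bilinear M).1 (bm_r_bilinear M).1.
  exact: (bm_r_bilinear M).2.
pose Psi := t2_lift (t := T2) (W := M) phi.
have Plin : klinear Psi := t2_lift_linear bphi.
have Pt : forall u v, Psi (t2 T2 u v) = phi u v := t2_lift_t T2 bphi.
exists (fun a => Psi (D a)); split.
  split; first exact: klcomp Plin HD.
  split=> [a x|x b] /=.
    rewrite -(mult_t T2 a x) F2 id_comul_t //.
    move: (D x); apply: (t2_unique (g := fun y => Psi (mult_id T2 (t3_l T3 a y)))
                                  (h := fun y => bm_l a (Psi y))).
    - exact: klcomp Plin (klcomp (@mult_id_lin _ _ T2 T3) (t3l_lin T3 a)).
    - exact: klcomp ((bm_l_bilinear M).2 a) Plin.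
    by move=> u v; rewrite t3l_t mult_id_t !Pt /phi bm_l_assoc bm_lr.
  rewrite -(mult_t T2 x b) F1 comul_id_t //.
  move: (D x); apply: (t2_unique (g := fun y => Psi (id_mult T2 (t3_r T3 y b)))
                                (h := fun y => bm_r (Psi y) b)).
  - exact: klcomp Plin (klcomp (@id_mult_lin _ _ T2 T3) (t3r_lin T3 b)).
  - exact: klcomp ((bm_r_bilinear M).1 b) Plin.
  by move=> u v; rewrite t3r_t id_mult_t !Pt /phi bm_r_assoc.
move=> a; rewrite -{2}(Hn a).
move: (D a); apply: (t2_unique (g := fun y => f (Psi y)) (h := fun y => g (mult y))).
- exact: klcomp fm.1 Plin.
- exact: klcomp gm.1 (@mult_lin _ _ T2).
move=> u v; rewrite Pt mult_t /phi fm.2.2 fm.2.1 Hx0 -gm.2.1 -gm.2.2 /=.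
by rewrite mulr1.
Qed.
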